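(* Let $\rho_{AB}$ be a bipartite state on systems $A,B$ of equal finite dimension $d$, each with observable $L=\sum_{n=0}^{d-1}n|n\rangle\langle n|$. If $\mathrm{modes}(\rho_{AB})\neq\{0\}$ but $[1,d-1]\cap\mathrm{modes}(\rho_{AB})=\emptyset$ — equivalently $\rho_{AB}=\rho_{AB}^{(0)}+\sum_{i\ge d}\rho_{AB}^{(i)}$ with $\sum_{i\ge d}\rho_{AB}^{(i)}\neq0$ — then $\rho_{AB}$ is not a product state.
   Context: $L_{AB}=L\otimes\mathbb{I}+\mathbb{I}\otimes L=\sum_c c\,\Pi_c$ with $\Pi_c$ its eigenprojectors. The $j$th mode of a bipartite operator $X$ is $X^{(j)}:=\sum_c\Pi_{c+j}X\Pi_c$, and $\mathrm{modes}(X):=\{j\in\mathbb{N}:X^{(j)}\neq0\}$. *)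

(* Defs.v *)
(* Complex scalars: an arbitrary numClosedFieldType C
   (e.g. the complex numbers R[i] over a real closed field, or algC). *)
From HB Require Import structures.
From mathcomp Require Import all_boot all_order all_algebra.
From mathcomp Require Export mxtens.
Unset Printing Implicit Defensive.
Import Order.TTheory GRing.Theory Num.Theory.
Local Open Scope ring_scope.

Section Defs.
Local Set Implicit Arguments.
Variable C : numClosedFieldType.

Definition adjmx {m n} (A : 'M[C]_(m, n)) : 'M[C]_(n, m) := (map_mx Num.conj A)^T.

Definition psd {n} (A : 'M[C]_n) : Prop :=
  A = adjmx A /\ forall v : 'cV[C]_n, 0 <= (adjmx v *m A *m v) 0 0.

Definition is_state {n} (A : 'M[C]_n) : Prop := psd A /\ \tr A = 1.

Definition Lobs (d : nat) : 'M[C]_d := diag_mx (\row_(i < d) (i : nat)%:R).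

Definition LAB (d : nat) : 'M[C]_(d * d) :=
  Lobs d *t (1%:M : 'M[C]_d) + (1%:M : 'M[C]_d) *t Lobs d.

Definition Pi (d c : nat) : 'M[C]_(d * d) :=
  \matrix_(i, j) ((i == j) && (LAB d i i == c%:R))%:R.

(* j-th mode: X^(j) = sum_c Pi_{c+j} X Pi_c ; the eigenvalues of L_AB are
   0, ..., 2d-2, so summing c over 0 .. 2d-1 covers all of them *)
Local Unset Implicit Arguments.
Definition mode (d j : nat) (X : 'M[C]_(d * d)) : 'M[C]_(d * d) :=
  \sum_(c < (2 * d)%N) Pi d (c + j) *m X *m Pi d c.

Definition modes (d : nat) (X : 'M[C]_(d * d)) : nat -> Prop :=
  fun j => mode d j X != 0.

Definition product_state (d : nat) (rho : 'M[C]_(d * d)) : Prop :=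
  exists (rA rB : 'M[C]_d), is_state rA /\ is_state rB /\ rho = rA *t rB.

End Defs.

Arguments mode {C}.
Arguments modes {C}.
Arguments product_state {C}.
Arguments adjmx {C m n}.
Arguments psd {C n}.
Arguments is_state {C n}.

(* Main.v *)
Require Import Defs.
From mathcomp Require Import all_boot all_order all_algebra.
From mathcomp Require Import zify.
Import Order.TTheory GRing.Theory Num.Theory.
Local Open Scope ring_scope.

Section H.
Variable C : numClosedFieldType.
Variable d : nat.

Lemma LAB_diag (a b : 'I_d) :
  LAB C d (mxtens_index (a, b)) (mxtens_index (a, b)) = (a + b)%:R.
Proof.
rewrite /LAB mxE !tensmxE /Lobs !mxE !eqxx /= !mulr1 !mul1r natrD //.
Qed.

Lemma PiMl c (X : 'M[C]_(d * d)) i l :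
  (Pi C d c *m X) i l = (LAB C d i i == c%:R)%:R * X i l.
Proof.
rewrite mxE (bigD1 i) //= big1 ?addr0; first by rewrite mxE eqxx.
by move=> m /negbTE hm; rewrite mxE eq_sym hm mul0r.
Qed.

Lemma PiMr c (X : 'M[C]_(d * d)) i l :
  (X *m Pi C d c) i l = X i l * (LAB C d l l == c%:R)%:R.
Proof.
rewrite mxE (bigD1 l) //= big1 ?addr0; first by rewrite mxE eqxx.
by move=> m /negbTE hm; rewrite mxE hm mulr0.
Qed.

Lemma modeE j (X : 'M[C]_(d * d)) (a b a' b' : 'I_d) :
  mode d j X (mxtens_index (a, b)) (mxtens_index (a', b')) =
  (a + b == a' + b' + j)%N%:R * X (mxtens_index (a, b)) (mxtens_index (a', b')).
Proof.
rewrite /mode summxE.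
have hc : (a' + b' < 2 * d)%N by have := ltn_ord a'; have := ltn_ord b'; lia.
rewrite (bigD1 (Ordinal hc)) //= big1 ?addr0.
  by rewrite PiMr PiMl !LAB_diag !eqr_nat eqxx mulr1.
move=> c hc'; rewrite PiMr PiMl !LAB_diag !eqr_nat.
have -> : (a' + b' == c)%N = false.
  by apply/negbTE/eqP => h; move/eqP: hc'; apply; apply: val_inj.
by rewrite mulr0.
Qed.

Lemma modes_of j (X : 'M[C]_(d * d)) (a b a' b' : 'I_d) :
  (a + b == a' + b' + j)%N ->
  X (mxtens_index (a, b)) (mxtens_index (a', b')) != 0 -> modes d X j.
Proof.
move=> e h; rewrite /modes; apply/eqP => h0.
have := congr1 (fun M : 'M[C]_(d*d) => M (mxtens_index (a, b)) (mxtens_index (a', b'))) h0.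
by rewrite modeE e mul1r mxE => h1; rewrite h1 eqxx in h.
Qed.

Lemma tr_nz (A : 'M[C]_d) : \tr A = 1 -> exists a, A a a != 0.
Proof.
move=> h; case: (pickP (fun a => A a a != 0)) => [a ha|hall]; first by exists a.
move: h; rewrite /mxtrace big1 => [/eqP|i _]; first by rewrite eq_sym oner_eq0.
by have := hall i => /= /negbFE/eqP.
Qed.

End H.

Theorem lemma4 (C : numClosedFieldType) (d : nat) (rho : 'M[C]_(d * d)) :
  is_state rho ->
  ~ (forall j : nat, modes d rho j <-> j = 0%N) ->
  (forall j : nat, (1 <= j <= d - 1)%N -> ~ modes d rho j) ->
  ~ product_state d rho.
Proof.
move=> _ Hnot H3 [rA [rB [[_ trA] [[_ trB] hrho]]]]; subst rho.
have [a0 ha0] := @tr_nz C d _ trA; have [b0 hb0] := @tr_nz C d _ trB.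
apply: Hnot => j; split; last first.
  move=> ->; apply: (@modes_of C d 0 _ a0 b0 a0 b0).
    by rewrite addn0.
  by rewrite tensmxE mulf_neq0.
rewrite /modes => hm.
have [[i k] hik] : exists ik : 'I_(d*d) * 'I_(d*d),
    mode d j (rA *t rB) ik.1 ik.2 != 0.
  case: (pickP (fun ik : 'I_(d*d) * 'I_(d*d) => mode d j (rA *t rB) ik.1 ik.2 != 0)) => [ik h|hall]; first by exists ik.
  move/eqP: hm; case; apply/matrixP => i k.
  by rewrite mxE; have := hall (i, k) => /= /negbFE/eqP.
move: hik => /=.
case: (mxtens_indexP i) => a b; case: (mxtens_indexP k) => a' b'.
rewrite modeE tensmxE.
case: (boolP (a + b == a' + b' + j)%N) => hab; last by rewrite mul0r eqxx.
rewrite mul1r mulf_eq0 negb_or => /andP [hA hB].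
case: (posnP j) => [//|jpos].
case: (leqP j (d - 1)) => hj.
  exfalso; apply: (H3 j); first by rewrite jpos hj.
  by apply: (@modes_of C d j _ a b a' b' hab); rewrite tensmxE mulf_neq0.
exfalso; apply: (H3 (a - a')%N).
  move/eqP: hab; have := ltn_ord a; have := ltn_ord b; have := ltn_ord a'; lia.
apply: (@modes_of C d (a - a') _ a b0 a' b0); last by rewrite tensmxE mulf_neq0.
apply/eqP; move/eqP: hab; have := ltn_ord a; have := ltn_ord b; have := ltn_ord a'; lia.
Qed.
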